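(* Let $X$ be a finitely primitive countable Markov shift over the alphabet $\mathbb N$, with associated integer $N\ge0$ and finite set $\Lambda$ of admissible strings of length $N$. Let $\phi\colon X\to\mathbb R$ be measurable and $\mu_\phi$ a Gibbs state for $\phi$. Then there exists $c>0$ such that for every $(a,b)\in\mathbb N^2$ and every integer $n>N$, $\mu_\phi([a]\cap\sigma^{-n}[b])\ge c\,\mu_\phi[a]\,\mu_\phi[b]$.
   Context: $\mathbb N=\{0,1,\dots\}$; $A$ is a 0-1 matrix indexed by $\mathbb N$ without zero rows or columns; $X=\{x\in\mathbb N^{\mathbb N}:A_{x_ix_{i+1}}=1\ \forall i\}$ with left shift $\sigma$. $E^n$: admissible strings of length $n$ (consecutive letters $a,b$ satisfy $A_{ab}=1$); $E^*=\bigcup_{n\ge1}E^n$; $[w]=\{x:x_i=w_i,\ i<|w|\}$. $X$ is finitely primitive if there is an integer $N\ge0$ and a finite set $\Lambda$ of admissible strings of common length $N$ (consisting of the empty string if $N=0$) such that for all $i,j\in E^*$ there is $\lambda\in\Lambda$ with $i\lambda j\in E^*$. $S_n\phi=\sum_{i<n}\phi\circ\sigma^i$. Gibbs state: there are $c_0\ge1$, $P\in\mathbb R$ with $c_0^{-1}\le\mu_\phi[x_0,\dots,x_{n-1}]/\exp(-Pn+S_n\phi(x))\le c_0$ for all $n\ge1$, $x\in X$. *)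

(* Defs.v *)
From HB Require Import structures.
From mathcomp Require Import all_boot all_order all_algebra.
From mathcomp Require Import all_classical all_reals all_analysis.
Set Implicit Arguments. Unset Strict Implicit. Unset Printing Implicit Defensive.
Import Order.TTheory GRing.Theory Num.Theory.
Local Open Scope classical_set_scope.
Local Open Scope ring_scope.

Definition seqN := nat -> nat.

(* A : 0-1 matrix indexed by N, given as a boolean relation. *)
Definition no_zero_rows_cols (A : nat -> nat -> bool) : Prop :=
  (forall a, exists b, A a b) /\ (forall b, exists a, A a b).

Definition adm (A : nat -> nat -> bool) (w : seq nat) : Prop :=
  forall i, (i.+1 < size w)%N -> A (nth 0%N w i) (nth 0%N w i.+1).

Definition Estar (A : nat -> nat -> bool) (w : seq nat) : Prop :=
  (0 < size w)%N /\ adm A w.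

Definition SX (A : nat -> nat -> bool) : set seqN :=
  [set x | forall i, A (x i) (x i.+1)].

Definition lshift_seq (x : seqN) : seqN := fun i => x i.+1.

Definition cyl (A : nat -> nat -> bool) (w : seq nat) : set seqN :=
  [set x | SX A x /\ forall i, (i < size w)%N -> x i = nth 0%N w i].

Definition finitely_primitive_with (A : nat -> nat -> bool) (N : nat)
  (Lambda : seq (seq nat)) : Prop :=
  (forall l, l \in Lambda -> size l = N /\ adm A l) /\
  (forall i j, Estar A i -> Estar A j ->
     exists2 l, l \in Lambda & Estar A (i ++ l ++ j)).

Definition full_cyls : set (set seqN) :=
  [set C | exists w : seq nat,
     C = [set x | forall i, (i < size w)%N -> x i = nth 0%N w i]].

(* N^N with the product (= cylinder = Borel) sigma-algebra *)
Definition Omega := g_sigma_algebraType full_cyls.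

Definition birkhoff {R : realType} (phi : seqN -> R) (n : nat) (x : seqN) : R :=
  \sum_(i < n) phi (iter i lshift_seq x).

Definition gibbs_state {R : realType} (A : nat -> nat -> bool)
  (phi : seqN -> R) (mu : set Omega -> \bar R) : Prop :=
  exists (c0 : R) (P : R), 1 <= c0 /\
    forall (n : nat) (x : seqN), (1 <= n)%N -> SX A x ->
      ((c0^-1 * expR (- P * n%:R + birkhoff phi n x))%:E <= mu (cyl A (mkseq x n)))%E
      /\ (mu (cyl A (mkseq x n)) <= (c0 * expR (- P * n%:R + birkhoff phi n x))%:E)%E.

(* Main.v *)
Require Import Defs.
From HB Require Import structures.
From mathcomp Require Import all_boot all_order all_algebra.
From mathcomp Require Import all_classical all_reals all_analysis.
From mathcomp Require Import ring lra zify.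
Import Order.TTheory GRing.Theory Num.Theory.
Local Open Scope classical_set_scope.
Local Open Scope ring_scope.
Definition fcyl (w : seq nat) : set Omega := [set x | forall i, (i < size w)%N -> x i = nth 0%N w i].
Lemma fcyl_meas w : measurable (fcyl w).
Proof. apply: sub_sigma_algebra. by exists w. Qed.

Lemma words_meas (W : set (seq nat)) : measurable (\bigcup_(w in W) fcyl w).
Proof.
have -> : \bigcup_(w in W) fcyl w = \bigcup_w (fcyl w `&` [set _ | W w]).
  apply/seteqP; split => x /=.
    by move=> [w Ww hw]; exists w.
  by move=> [w _ [hw Ww]]; exists w.
apply: countable_bigcupT_measurable; first exact: countableP.
move=> w; case: (pselect (W w)) => Ww.
  have -> : [set _ : Omega | W w] = setT by apply/seteqP; split.
  by rewrite setIT; apply: fcyl_meas.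
have -> : [set _ : Omega | W w] = set0 by apply/seteqP; split.
by rewrite setI0.
Qed.

Lemma coord_meas i e : measurable [set x : Omega | x i = e].
Proof.
have -> : [set x : Omega | x i = e] =
   \bigcup_(w in [set w | size w = i.+1 /\ nth 0%N w i = e]) fcyl w.
  apply/seteqP; split => x /=.
    move=> hx; exists (mkseq x i.+1).
    by split; [exact: size_mkseq | rewrite nth_mkseq].
    by move=> k; rewrite size_mkseq => hk; rewrite nth_mkseq.
  by move=> [w [hs he] hw]; rewrite -he hw // hs.
exact: words_meas.
Qed.

Lemma SX_meas A : measurable (SX A : set Omega).
Proof.
have -> : (SX A : set Omega) = \bigcap_i
   \bigcup_(w in [set w | size w = i.+2 /\ A (nth 0%N w i) (nth 0%N w i.+1)]) fcyl w.
  apply/seteqP; split => x /=.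
    move=> hx i _; exists (mkseq x i.+2).
      by split; [exact: size_mkseq | rewrite !nth_mkseq // ?hx].
    by move=> k; rewrite size_mkseq => hk; rewrite nth_mkseq.
  move=> hx i; have [w [hs ha] hw] := hx i I.
  by rewrite !hw ?hs.
apply: bigcapT_measurable => i; exact: words_meas.
Qed.

Lemma cyl_eq A w : (cyl A w : set Omega) = SX A `&` fcyl w.
Proof. by []. Qed.

Lemma cyl_meas A w : measurable (cyl A w : set Omega).
Proof. rewrite cyl_eq; apply: measurableI; [exact: SX_meas | exact: fcyl_meas]. Qed.

Lemma iter_shift n (x : seqN) i : iter n lshift_seq x i = x (i + n)%N.
Proof. by elim: n i => [|n IH] i /=; rewrite ?addn0 // /lshift_seq IH addnS. Qed.

Lemma SX_shift A n x : SX A x -> SX A (iter n lshift_seq x).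
Proof. by move=> hx i; rewrite !iter_shift. Qed.

Lemma birkhoffD (R : realType) (phi : seqN -> R) p q x :
  birkhoff phi (p + q) x = birkhoff phi p x + birkhoff phi q (iter p lshift_seq x).
Proof.
rewrite /birkhoff big_split_ord /=; congr (_ + _).
apply: eq_bigr => i _; congr phi.
by rewrite -iterD addnC.
Qed.

Fixpoint extw (s : nat -> nat) (w : seq nat) (i : nat) : nat :=
  match i with
  | 0 => nth 0%N w 0
  | j.+1 => if (j.+1 < size w)%N then nth 0%N w j.+1 else s (extw s w j)
  end.

Lemma extend {A} (hA : no_zero_rows_cols A) {w} : Estar A w ->
  exists y, SX A y /\ forall i, (i < size w)%N -> y i = nth 0%N w i.
Proof.
case: hA => hr _ [hw aw].
pose s a := xchoose (hr a).
have hs a : A a (s a) by exact: xchooseP.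
have he i : (i < size w)%N -> extw s w i = nth 0%N w i.
  by case: i => [|i] //= ->.
exists (extw s w); split; last exact: he.
move=> i /=; case: ifP => hi; last exact: hs.
by rewrite he ?(ltn_trans _ hi) //; apply: aw.
Qed.

Lemma mkseq_eqw {x : seqN} {w} : (forall i, (i < size w)%N -> x i = nth 0%N w i) ->
  mkseq x (size w) = w.
Proof.
move=> h; apply: (@eq_from_nth _ 0%N); rewrite size_mkseq // => i hi.
by rewrite nth_mkseq // h.
Qed.

Lemma unif_pos (T : eqType) (R : realType) (s : seq T) (Q : T -> R -> Prop) :
  (forall t d d', Q t d -> d' <= d -> Q t d') ->
  (forall t, t \in s -> exists2 d, 0 < d & Q t d) ->
  exists2 d, 0 < d & forall t, t \in s -> Q t d.
Proof.
move=> hQ; elim: s => [|t s IH] h; first by exists 1.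
have [d1 d1p h1] := h t (mem_head _ _).
have [d2 d2p h2] : exists2 d, 0 < d & forall t, t \in s -> Q t d.
  by apply: IH => t' ht'; apply: h; rewrite in_cons ht' orbT.
exists (Num.min d1 d2); first by rewrite lt_min d1p d2p.
move=> t'; rewrite in_cons => /orP [/eqP -> | ht'].
  by apply: hQ h1 _; rewrite ge_min lexx.
by apply: hQ (h2 _ ht') _; rewrite ge_min lexx orbT.
Qed.

Definition Ef {R : realType} (P : R) (phi : seqN -> R) (n : nat) (x : seqN) : R :=
  expR (- P * n%:R + birkhoff phi n x).

Lemma Ef_add (R : realType) (P : R) phi p q x :
  Ef P phi (p + q) x = Ef P phi p x * Ef P phi q (iter p lshift_seq x).
Proof.
rewrite /Ef -expRD birkhoffD natrD; congr expR.
by rewrite mulrDr addrACA.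
Qed.

Lemma Ef0 (R : realType) (P : R) phi x : Ef P phi 0 x = 1.
Proof. by rewrite /Ef /birkhoff big_ord0 mulr0 addr0 expR0. Qed.

Lemma Ef_gt0 (R : realType) (P : R) phi n x : 0 < Ef P phi n x.
Proof. exact: expR_gt0. Qed.
Lemma cyl_rcons A u : (cyl A u : set Omega) = \bigcup_e (cyl A (rcons u e) : set Omega).
Proof.
apply/seteqP; split => x /=.
  move=> [hx hxu]; exists (x (size u)) => //; split => // i.
  rewrite size_rcons ltnS nth_rcons leq_eqVlt => /orP [/eqP ->|hi].
    by rewrite ltnn eqxx.
  by rewrite hi hxu.
move=> [e _ [hx hxu]]; split => // i hi.
by rewrite hxu ?nth_rcons ?hi // size_rcons ltnS ltnW.
Qed.

Lemma cyl_rcons_triv A u (S : set Omega) :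
  trivIset setT (fun e => (cyl A (rcons u e) : set Omega) `&` S).
Proof.
move=> i j _ _ [x [[[_ hi] _] [[_ hj] _]]].
have := hi (size u); have := hj (size u).
rewrite !size_rcons !nth_rcons ltnn eqxx ltnSn => hj' hi'.
by rewrite -hj' // -hi'.
Qed.

Lemma real_ineq (R: realType) (c0 dl mb E1 E2 E3 : R): 0<c0 -> 0<=dl -> 0<=mb -> 0 <= E1 -> dl <= E2 -> mb <= c0*E3 -> c0^-1*(c0^-1*(c0^-1*dl)) * mb * (c0*E1) <= c0^-1 * (E1*E2*E3).
Proof.
move=> c0p dl0 mb0 E10 h2 h3.
have c0n : c0 != 0 by rewrite gt_eqF.
have -> : c0^-1*(c0^-1*(c0^-1*dl)) * mb * (c0*E1) = c0^-1 * (E1 * (dl * (c0^-1 * mb))) by field.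
rewrite -mulrA; apply: ler_wpM2l; first by rewrite invr_ge0 ltW.
apply: ler_wpM2l => //; apply: ler_pM => //; first by rewrite mulr_ge0 // invr_ge0 ltW.
by rewrite ler_pdivrMl.
Qed.

Theorem lemma2p5 (R : realType) (A : nat -> nat -> bool) (N : nat)
  (Lambda : seq (seq nat))
  (hA : no_zero_rows_cols A)
  (hprim : finitely_primitive_with A N Lambda)
  (phi : seqN -> R) (hphi : measurable_fun (SX A : set Omega) phi)
  (mu : {measure set Omega -> \bar R})
  (hgibbs : gibbs_state A phi mu) :
  exists2 c : R, 0 < c &
    forall (a b n : nat), (N < n)%N ->
      (c%:E * mu (cyl A [:: a] : set Omega) * mu (cyl A [:: b] : set Omega)
       <= mu (cyl A [:: a] `&` (iter n lshift_seq) @^-1` (cyl A [:: b]) : set Omega))%E.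
Proof.
have [c0 [P [c01 hg]]] := hgibbs.
have c0p : 0 < c0 by apply: lt_le_trans c01.
have gl n x : (1 <= n)%N -> SX A x ->
   ((c0^-1 * Ef P phi n x)%:E <= mu (cyl A (mkseq x n)))%E.
  by move=> hn hx; have [] := hg n x hn hx.
have gu n x : (1 <= n)%N -> SX A x ->
   (mu (cyl A (mkseq x n)) <= (c0 * Ef P phi n x)%:E)%E.
  by move=> hn hx; have [] := hg n x hn hx.
have [dl dlp hdl] : exists2 d : R, 0 < d & forall l, l \in Lambda ->
    forall z, SX A z -> mkseq z N = l -> d <= Ef P phi N z.
  apply: unif_pos.
    by move=> t d d' h hd z hz hzl; apply: le_trans hd (h z hz hzl).
  move=> l hl; have [hsz hadm] := hprim.1 l hl.
  move: hsz; case: N hprim => [|N'] _ hsz.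
    by exists 1 => // z _ _; rewrite Ef0.
  have hE : Estar A l by split; rewrite ?hsz.
  have [z0 [hz0 hz0l]] := extend hA hE.
  have ml := mkseq_eqw hz0l; rewrite hsz in ml.
  exists (c0^-1 * (c0^-1 * Ef P phi N'.+1 z0)).
    by rewrite !mulr_gt0 ?invr_gt0 ?Ef_gt0.
  move=> z hz hzl.
  have h1 := gl _ _ (ltn0Sn N') hz0; rewrite ml in h1.
  have h2 := gu _ _ (ltn0Sn N') hz; rewrite hzl in h2.
  have := le_trans h1 h2; rewrite lee_fin => h3.
  rewrite -[X in _ <= X](mulKf (lt0r_neq0 c0p)).
  by rewrite ler_wpM2l // invr_ge0 ltW.
pose c := c0^-1 * (c0^-1 * (c0^-1 * dl)).
have cp : 0 < c by rewrite !mulr_gt0 ?invr_gt0.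
exists c => // a b n hn.
have hEb : Estar A [:: b] by split => // -[].
have [yb [hyb hybl]] := extend hA hEb.
have mbfin : (mu (cyl A [:: b] : set Omega) \is a fin_num)%E.
  rewrite ge0_fin_numE ?measure_ge0 //.
  apply: le_lt_trans (ltry _).
  move: (gu 1%N yb isT hyb); rewrite (mkseq_eqw hybl); exact.
set mb := fine (mu (cyl A [:: b] : set Omega)).
have mbE : mu (cyl A [:: b] : set Omega) = mb%:E by rewrite fineK.
have mb0 : 0 <= mb by rewrite fine_ge0 ?measure_ge0.
have claim : forall d u, (0 < size u)%N ->
  ((c * mb)%:E * mu (cyl A u : set Omega) <=
     mu ((cyl A u : set Omega) `&` [set x | x (size u + N + d)%N = b]))%E.
  elim=> [|d IH] u hu.
    case: (pselect (exists x0, (cyl A u : set Omega) x0)) => [[x0 hx0]|nx]; last first.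
      have -> : (cyl A u : set Omega) = set0.
        by apply/seteqP; split => x // hx; apply: nx; exists x.
      by rewrite measure0 mule0 measure_ge0.
    have hEu : Estar A u.
      split => // i hi; have [hx0S hx0u] := hx0.
      rewrite -(hx0u i) ?(ltn_trans _ hi) // -(hx0u i.+1) //; exact: hx0S.
    have [l hl hEl] := hprim.2 u [:: b] hEu hEb.
    have [hls _] := hprim.1 l hl.
    have [y [hy hyl]] := extend hA hEl.
    set p := size u.
    have sz : size (u ++ l ++ [:: b]) = (p + N + 1)%N by rewrite !size_cat hls addnA.
    have Hsub : (cyl A (u ++ l ++ [:: b]) : set Omega) `<=`
        ((cyl A u : set Omega) `&` [set x | x (p + N + 0)%N = b]).
      move=> x [hx hxw]; split; first split => //.
        move=> i hi; rewrite hxw ?nth_cat ?hi // sz.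
        lia.
      rewrite /= addn0 hxw ?sz ?addn1 // nth_cat ltnNge leq_addr /= addKn.
      by rewrite nth_cat hls ltnn subnn.
    have Tm : measurable ((cyl A u : set Omega) `&` [set x | x (p + N + 0)%N = b]).
      by apply: measurableI; [exact: cyl_meas | exact: coord_meas].
    apply: le_trans (le_measure mu (mem_set (cyl_meas _ _)) (mem_set Tm) Hsub).
    have m1 : mkseq y (p + N + 1) = u ++ l ++ [:: b] by rewrite -sz; exact: mkseq_eqw hyl.
    have L1 := gl (p + N + 1)%N y ltac:(by rewrite addn1) hy; rewrite m1 in L1.
    apply: le_trans L1.
    have yu : forall i, (i < size u)%N -> y i = nth 0%N u i.
      move=> i hi; rewrite hyl ?nth_cat ?hi // sz.
      lia.
    have U1 := gu p y hu hy; rewrite (mkseq_eqw yu) in U1.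
    have yl : forall i, (i < size l)%N -> iter p lshift_seq y i = nth 0%N l i.
      move=> i hi; rewrite iter_shift hyl; last by rewrite sz; lia.
      by rewrite nth_cat ltnNge leq_addl /= addnK nth_cat hi.
    have D := hdl l hl (iter p lshift_seq y) (SX_shift _ _ _ hy) ltac:(by rewrite -hls; exact: mkseq_eqw yl).
    have yb' : forall i, (i < size [:: b])%N -> iter (p + N) lshift_seq y i = nth 0%N [:: b] i.
      move=> [|i] // _; rewrite iter_shift add0n hyl ?sz ?addn1 //.
      by rewrite nth_cat ltnNge leq_addr /= addKn nth_cat hls ltnn subnn.
    have U3 := gu 1%N (iter (p + N) lshift_seq y) isT (SX_shift _ _ _ hy).
    rewrite (mkseq_eqw yb') mbE lee_fin in U3.
    rewrite !Ef_add.
    apply: le_trans (lee_wpmul2l _ U1) _; first by rewrite lee_fin mulr_ge0 // ltW.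
    rewrite -EFinM lee_fin.
    rewrite /c; apply: real_ineq => //; [exact: ltW | exact/ltW/Ef_gt0].
  rewrite (cyl_rcons A u) setI_bigcupl.
  have trT : trivIset setT (fun e => (cyl A (rcons u e) : set Omega)).
    by move=> i j Di Dj h; apply: (cyl_rcons_triv A u setT) Di Dj _; rewrite !setIT.
  set S := [set x | _ = b].
  have E1 := measure_bigcup mu setT (fun e => cyl A (rcons u e) : set Omega)
     (fun e _ => cyl_meas A (rcons u e)) trT.
  have E2 := measure_bigcup mu setT (fun e => (cyl A (rcons u e) : set Omega) `&` S)
     (fun e _ => measurableI _ _ (cyl_meas A (rcons u e)) (coord_meas _ _)) (cyl_rcons_triv A u _).
  rewrite E1 E2.
  rewrite -nneseriesZl; last by move=> *; exact: measure_ge0.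
  apply: lee_nneseries; first by move=> i _ _; rewrite mule_ge0 ?measure_ge0 // lee_fin mulr_ge0 // ltW.
  move=> e _.
  have := IH (rcons u e) ltac:(by rewrite size_rcons).
  have -> : (size (rcons u e) + N + d = size u + N + d.+1)%N by rewrite size_rcons; lia.
  done.
have -> : (cyl A [:: a] `&` (iter n lshift_seq) @^-1` (cyl A [:: b]) : set Omega)
   = (cyl A [:: a] : set Omega) `&` [set x | x (1 + N + (n - N.+1))%N = b].
  have -> : (1 + N + (n - N.+1))%N = n by rewrite add1n subnKC.
  apply/seteqP; split => x /= [hx hx2]; split => //.
    by case: hx2 => _ /(_ 0%N isT); rewrite iter_shift.
  split; first exact: SX_shift hx.1.
  by move=> [|i] //= _; rewrite iter_shift.
rewrite mbE muleAC -EFinM.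
exact: claim.
Qed.
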